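(* Fix a positive $\epsilon\in\Gamma$. Let $d_0\in\mathrm{Der}_0(\mathfrak{L},\mathfrak{V})$ satisfy $d_0(L_{k\epsilon})=0$ for all $k\in\mathbb{Z}$. Then $d_0(A_p)=0$ whenever $A\in\{L,I\}$ and $p\in\Gamma$, or $A\in\{G,H\}$ and $p\in s+\Gamma$. In particular $d_0=0$.
   Context: Let $\Gamma$ be a nontrivial additive subgroup of $\mathbb{R}$, and let $s\in\mathbb{R}$ with $2s\in\Gamma$. The Lie superalgebra $\mathfrak{L}$ over $\mathbb{C}$ has basis $\{L_p,I_p,G_r,H_r\mid p\in\Gamma,\ r\in s+\Gamma\}$. Here $L_p,I_p$ are even and $G_r,H_r$ are odd. The nonzero super-brackets are $[L_p,L_q]=(p-q)L_{p+q}$, $[L_p,I_q]=(p-q)I_{p+q}$, $[L_p,G_r]=(\tfrac p2-r)G_{p+r}$, $[L_p,H_r]=(\tfrac p2-r)H_{p+r}$, $[G_r,G_t]=I_{r+t}$, $[I_p,G_r]=(p-2r)H_{p+r}$. All other brackets of basis elements vanish, apart from those forced by super-antisymmetry. Grading: - $\mathbb{Z}_s=\Gamma\cup(s+\Gamma)$, an additive subgroup of $\mathbb{R}$. - $\mathfrak{L}=\bigoplus_{p\in\mathbb{Z}_s}\mathfrak{L}_p$, where $\mathfrak{L}_p$ is spanned by those of $L_p,I_p,G_p,H_p$ that exist. - $\mathfrak{V}=\mathfrak{L}\otimes\mathfrak{L}$, with $\mathfrak{V}_r=\bigoplus_{p+q=r}\mathfrak{L}_p\otimes\mathfrak{L}_q$.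 - $\mathfrak{L}$ acts on $\mathfrak{V}$ by $x\circ(a\otimes b)=[x,a]\otimes b+(-1)^{[x][a]}a\otimes[x,b]$, where $[x]$ is parity. Derivations: - A homogeneous derivation of parity $[d]$ is a linear map $d:\mathfrak{L}\to\mathfrak{V}$ shifting parity by $[d]$ and satisfying $d([x,y])=(-1)^{[d][x]}x\circ d(y)-(-1)^{[y]([d]+[x])}y\circ d(x)$. - A derivation is a sum of an even and an odd one. - $\mathrm{Der}_0(\mathfrak{L},\mathfrak{V})$ is the set of derivations $d$ with $d(\mathfrak{L}_p)\subset\mathfrak{V}_{p}$ for all $p\in\mathbb{Z}_s$. *)

(* Defs.v *)
From Stdlib Require Import Reals List ZArith.
Open Scope R_scope.

(* Complex scalars: C = R x R (real part, imaginary part).  Only the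
   complex vector-space operations are ever needed (all structure
   constants are real and derivations are determined by their values
   on basis vectors). *)
Definition C : Type := (R * R)%type.
Definition C0 : C := (0, 0).
Definition Cadd (z w : C) : C := (fst z + fst w, snd z + snd w).
Definition Cscale (a : R) (z : C) : C := (a * fst z, a * snd z).

Inductive kind := KL | KI | KG | KH.

Definition parity (k : kind) : bool :=
  match k with KL | KI => false | KG | KH => true end.

Definition kind_eqb (a b : kind) : bool :=
  match a, b with
  | KL, KL | KI, KI | KG, KG | KH, KH => true
  | _, _ => false
  end.

Definition valid (Gam : R -> Prop) (s : R) (k : kind) (p : R) : Prop :=
  if parity k then Gam (p - s) else Gam p.

Definition is_add_subgroup (Gam : R -> Prop) : Prop :=
  Gam 0 /\ (forall x y, Gam x -> Gam y -> Gam (x + y)) /\ (forall x, Gam x -> Gam (- x)).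

(* Bracket of basis vectors: [X_p, Y_q] = brc X p Y q * Z_{p+q} with Z = brk X Y,
   or 0 if brk X Y = None (includes the super-antisymmetric counterparts). *)
Definition brk (a b : kind) : option kind :=
  match a, b with
  | KL, KL => Some KL
  | KL, KI => Some KI | KI, KL => Some KI
  | KL, KG => Some KG | KG, KL => Some KG
  | KL, KH => Some KH | KH, KL => Some KH
  | KG, KG => Some KI
  | KI, KG => Some KH | KG, KI => Some KH
  | _, _ => None
  end.

Definition brc (a : kind) (p : R) (b : kind) (q : R) : R :=
  match a, b with
  | KL, KL => p - q
  | KL, KI => p - q | KI, KL => p - q
  | KL, KG => p / 2 - q | KG, KL => p - q / 2
  | KL, KH => p / 2 - q | KH, KL => p - q / 2
  | KG, KG => 1
  | KI, KG => p - 2 * q | KG, KI => 2 * p - q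
  | _, _ => 0
  end.

Definition sgn (b : bool) : R := if b then -1 else 1.

(* Elements of V = L (x) L as coefficient functions on pairs of basis indices:
   v k1 r1 k2 r2 = coefficient of (k1)_{r1} (x) (k2)_{r2}. *)
Definition Vvec : Type := kind -> R -> kind -> R -> C.
Definition V0 : Vvec := fun _ _ _ _ => C0.
Definition Vadd (v w : Vvec) : Vvec := fun a r b t => Cadd (v a r b t) (w a r b t).
Definition Vscale (c : R) (v : Vvec) : Vvec := fun a r b t => Cscale c (v a r b t).

Definition isV (Gam : R -> Prop) (s : R) (v : Vvec) : Prop :=
  (exists l : list (kind * R * kind * R),
      forall a r b t, v a r b t <> C0 -> In (a, r, b, t) l) /\
  (forall a r b t, v a r b t <> C0 -> valid Gam s a r /\ valid Gam s b t).

Definition kinds : list kind := KL :: KI :: KG :: KH :: nil.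

Definition Csum (l : list C) : C := fold_right Cadd C0 l.

Definition opt_is (o : option kind) (k : kind) : bool :=
  match o with Some k' => kind_eqb k' k | None => false end.

(* Action of the basis vector x = (kx)_p on V:
   x o (a (x) b) = [x,a] (x) b + (-1)^{[x][a]} a (x) [x,b]. *)
Definition act (kx : kind) (p : R) (v : Vvec) : Vvec :=
  fun k1 r1 k2 r2 =>
    Csum (map (fun k =>
      Cadd
        (if opt_is (brk kx k) k1
         then Cscale (brc kx p k (r1 - p)) (v k (r1 - p) k2 r2) else C0)
        (if opt_is (brk kx k) k2
         then Cscale (sgn (parity kx && parity k1) * brc kx p k (r2 - p))
                     (v k1 r1 k (r2 - p)) else C0)) kinds).

(* A linear map d : L -> V, given by its values d k p on basis vectors k_p. *)
Definition Lmap : Type := kind -> R -> Vvec.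

Definition d_br (d : Lmap) (kx : kind) (p : R) (ky : kind) (q : R) : Vvec :=
  match brk kx ky with
  | Some kz => Vscale (brc kx p ky q) (d kz (p + q))
  | None => V0
  end.

Definition is_hom_der (Gam : R -> Prop) (s : R) (e : bool) (d : Lmap) : Prop :=
  (forall k p, valid Gam s k p ->
     isV Gam s (d k p) /\
     (forall a r b t, d k p a r b t <> C0 ->
        xorb (parity a) (parity b) = xorb e (parity k))) /\
  (forall kx p ky q, valid Gam s kx p -> valid Gam s ky q ->
     d_br d kx p ky q =
     Vadd (Vscale (sgn (e && parity kx)) (act kx p (d ky q)))
          (Vscale (- sgn (parity ky && xorb e (parity kx))) (act ky q (d kx p)))).

Definition Der0 (Gam : R -> Prop) (s : R) (d : Lmap) : Prop :=
  (exists d0 d1 : Lmap,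
     is_hom_der Gam s false d0 /\ is_hom_der Gam s true d1 /\
     (forall k p, valid Gam s k p -> d k p = Vadd (d0 k p) (d1 k p))) /\
  (forall k p, valid Gam s k p ->
     forall a r b t, d k p a r b t <> C0 -> r + t = p).

(* Main.v *)
Require Import Defs.
From Stdlib Require Import Reals List ZArith.
From Stdlib Require Import Lra Psatz Classical FunctionalExtensionality.
Open Scope R_scope.

Definition Qf A a b p r0 t0 m := brc KL (-m) A (m+p) * brc KL m A p - brc KL (-m) a (r0+m) * brc KL m a r0 - brc KL (-m) b (t0+m) * brc KL m b t0.

Lemma polyP A a b p r0 t0 m : 0 < m -> Qf A a b p r0 t0 m = 0 -> Qf A a b p r0 t0 (2*m) = 0 -> Qf A a b p r0 t0 (3*m) = 0 -> False.
Proof. intros; destruct A, a, b; unfold Qf, brc in *; nra. Qed.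

Lemma act_zero X p (v : Vvec) : (forall a r b t, v a r b t = C0) ->
  forall k1 r1 k2 r2, act X p v k1 r1 k2 r2 = C0.
Proof.
  intros H k1 r1 k2 r2. unfold act; simpl. rewrite !H.
  repeat match goal with |- context [if ?c then _ else _] => destruct c end;
  unfold Cadd, Cscale, C0; simpl; f_equal; ring.
Qed.

Lemma act_KL m (v : Vvec) a r b t : act KL m v a r b t =
  Cadd (Cscale (brc KL m a (r-m)) (v a (r-m) b t)) (Cscale (brc KL m b (t-m)) (v a r b (t-m))).
Proof.
  destruct a, b; unfold act; simpl; unfold Cadd, Cscale, C0; simpl; f_equal; ring.
Qed.

Lemma brk_KL X : brk KL X = Some X.
Proof. destruct X; reflexivity. Qed.

Lemma hom_key Gam s bb e X p m : is_hom_der Gam s bb e -> valid Gam s X p -> Gam m ->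
  (forall a r b t, e KL m a r b t = C0) -> forall a r b t,
  Cscale (brc KL m X p) (e X (m+p) a r b t) = act KL m (e X p) a r b t.
Proof.
  intros [_ H] HX Hm Hz a r b t.
  specialize (H KL m X p Hm HX).
  apply (f_equal (fun v => v a r b t)) in H.
  unfold d_br in H; rewrite brk_KL in H. unfold Vscale, Vadd in H.
  rewrite (act_zero X p _ Hz) in H. rewrite Bool.andb_false_r in H.
  simpl sgn in H. rewrite H.
  destruct (act KL m (e X p) a r b t). unfold Cadd, Cscale, C0; simpl; f_equal; ring.
Qed.

Lemma list_bound (l : list (kind*R*kind*R)) : exists B, forall a r b t, In (a,r,b,t) l -> Rabs r <= B.
Proof.
  induction l as [|[[[a r] b] t] l [B HB]].
  - exists 0. intros. destruct H.
  - exists (Rmax (Rabs r) B). intros a' r' b' t' [E|E].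
    + inversion E; subst. apply Rmax_l.
    + eapply Rle_trans; [apply (HB _ _ _ _ E)| apply Rmax_r].
Qed.

Lemma Gam_mult Gam eps : is_add_subgroup Gam -> Gam eps -> forall k, Gam (IZR k * eps).
Proof.
  intros [H0 [Hadd Hopp]] He.
  assert (Hn : forall n, Gam (INR n * eps)).
  { induction n. simpl. rewrite Rmult_0_l; auto.
    rewrite S_INR. replace ((INR n + 1) * eps) with (INR n * eps + eps) by ring. auto. }
  intros k. assert (E0 : IZR (Z.abs k) = INR (Z.abs_nat k)).
  { rewrite INR_IZR_INZ, Zabs2Nat.id_abs. reflexivity. }
  destruct (Z.abs_spec k) as [[_ E]|[_ E]].
  - rewrite E in E0. rewrite E0; auto.
  - replace (IZR k) with (- IZR (Z.abs k)) by (rewrite E, opp_IZR; ring). rewrite E0.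
    replace (- INR (Z.abs_nat k) * eps) with (- (INR (Z.abs_nat k) * eps)) by ring. auto.
Qed.

Lemma Rabs_maj2_ x : - x <= Rabs x.
Proof. pose proof (Rle_abs (-x)). rewrite Rabs_Ropp in H. exact H. Qed.

Theorem mainTheorem11 (Gam : R -> Prop) (s eps : R) (d : Lmap) :
  is_add_subgroup Gam -> (exists x, Gam x /\ x <> 0) -> Gam (2 * s) ->
  Gam eps -> 0 < eps ->
  Der0 Gam s d ->
  (forall k : Z, d KL (IZR k * eps) = V0) ->
  forall (A : kind) (p : R), valid Gam s A p -> d A p = V0.
Proof.
  intros HG _ _ Heps Hpos [[d0 [d1 [Hd0 [Hd1 Hsplit]]]] _] HL A p HA.
  pose proof (Gam_mult Gam eps HG Heps) as GM.
  destruct HG as [HG0 [Hadd Hopp]].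
  assert (Hval : forall X q m, Gam m -> valid Gam s X q -> valid Gam s X (m+q)).
  { intros X q m Hm HX. unfold valid in *. destruct (parity X).
    replace (m + q - s) with (m + (q - s)) by ring. auto. auto. }
  assert (Z01 : forall k a r b t, d0 KL (IZR k * eps) a r b t = C0 /\ d1 KL (IZR k * eps) a r b t = C0).
  { intros k a r b t.
    assert (HV : valid Gam s KL (IZR k * eps)) by (unfold valid; simpl; auto).
    pose proof (f_equal (fun v => v a r b t) (HL k)) as E. simpl in E.
    rewrite (Hsplit _ _ HV) in E. unfold Vadd, V0 in E.
    destruct (proj1 Hd0 _ _ HV) as [_ P0]. destruct (proj1 Hd1 _ _ HV) as [_ P1].
    destruct (classic (d0 KL (IZR k * eps) a r b t = C0)) as [E0|E0].
    - rewrite E0 in E. split; auto. destruct (d1 KL (IZR k * eps) a r b t).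
      unfold Cadd, C0 in *; simpl in *. injection E; intros; f_equal; lra.
    - exfalso. destruct (classic (d1 KL (IZR k * eps) a r b t = C0)) as [E1|E1].
      + rewrite E1 in E. apply E0. destruct (d0 KL (IZR k * eps) a r b t).
        unfold Cadd, C0 in *; simpl in *. injection E; intros; f_equal; lra.
      + specialize (P0 _ _ _ _ E0). specialize (P1 _ _ _ _ E1).
        simpl in *. rewrite P0 in P1. destruct (xorb (parity a) (parity b)); discriminate. }
  assert (keyd : forall k X q, valid Gam s X q -> forall a r b t,
    Cscale (brc KL (IZR k * eps) X q) (d X (IZR k * eps + q) a r b t) =
    Cadd (Cscale (brc KL (IZR k * eps) a (r - IZR k * eps)) (d X q a (r - IZR k * eps) b t))
         (Cscale (brc KL (IZR k * eps) b (t - IZR k * eps)) (d X q a r b (t - IZR k * eps)))).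
  { intros k X q HX a r b t.
    rewrite (Hsplit X q HX), (Hsplit X _ (Hval X q _ (GM k) HX)). unfold Vadd.
    pose proof (hom_key _ _ _ _ X q _ Hd0 HX (GM k) (fun a r b t => proj1 (Z01 k a r b t)) a r b t) as K0.
    pose proof (hom_key _ _ _ _ X q _ Hd1 HX (GM k) (fun a r b t => proj2 (Z01 k a r b t)) a r b t) as K1.
    rewrite act_KL in K0, K1.
    destruct (d0 X (IZR k * eps + q) a r b t), (d1 X (IZR k * eps + q) a r b t),
      (d0 X q a (r - IZR k * eps) b t), (d1 X q a (r - IZR k * eps) b t),
      (d0 X q a r b (t - IZR k * eps)), (d1 X q a r b (t - IZR k * eps)).
    unfold Cadd, Cscale in *; simpl in *.
    injection K0; injection K1; intros; f_equal; lra. }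
  apply functional_extensionality; intro a.
  apply functional_extensionality; intro r0.
  apply functional_extensionality; intro b.
  apply functional_extensionality; intro t0.
  unfold V0.
  destruct (classic (d A p a r0 b t0 = C0)) as [|Hne]; auto. exfalso.
  destruct (proj1 (proj1 (proj1 Hd0 A p HA))) as [l0 Hl0].
  destruct (proj1 (proj1 (proj1 Hd1 A p HA))) as [l1 Hl1].
  destruct (list_bound (l0 ++ l1)) as [B HB].
  assert (Bd : forall a r b t, d A p a r b t <> C0 -> Rabs r <= B).
  { intros a' r b' t Hn. apply (HB a' r b' t). apply in_or_app.
    rewrite (Hsplit A p HA) in Hn. unfold Vadd in Hn.
    destruct (classic (d0 A p a' r b' t = C0)) as [E|E].
    - right. apply Hl1. intro E'. apply Hn. rewrite E, E'. unfold Cadd, C0; simpl; f_equal; ring.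
    - left. apply Hl0; auto. }
  assert (HB0 := Bd _ _ _ _ Hne).
  assert (step : forall k, 2 * B < IZR k * eps ->
    Cscale (Qf A a b p r0 t0 (IZR k * eps)) (d A p a r0 b t0) = C0).
  { intros k Hk. set (m := IZR k * eps) in *.
    assert (Zr1 : d A p a (r0 + m) b (t0 - m) = C0).
    { destruct (classic (d A p a (r0 + m) b (t0 - m) = C0)) as [|N]; auto.
      apply Bd in N. pose proof (Rle_abs (r0 + m)). pose proof (Rabs_maj2_ r0). lra. }
    assert (Zr2 : d A p a (r0 - m) b (t0 + m) = C0).
    { destruct (classic (d A p a (r0 - m) b (t0 + m) = C0)) as [|N]; auto.
      apply Bd in N. pose proof (Rabs_maj2_ (r0 - m)). pose proof (Rle_abs r0). lra. }
    pose proof (keyd k A p HA a (r0 + m) b t0) as K1.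
    pose proof (keyd k A p HA a r0 b (t0 + m)) as K2.
    pose proof (keyd (- k)%Z A (m + p) (Hval A p m (GM k) HA) a r0 b t0) as K3.
    fold m in K1, K2.
    replace (IZR (- k) * eps) with (- m) in K3 by (unfold m; rewrite opp_IZR; ring).
    replace (- m + (m + p)) with p in K3 by ring.
    replace (r0 - - m) with (r0 + m) in K3 by ring.
    replace (t0 - - m) with (t0 + m) in K3 by ring.
    replace (r0 + m - m) with r0 in K1 by ring.
    replace (t0 + m - m) with t0 in K2 by ring.
    rewrite Zr1 in K1. rewrite Zr2 in K2. unfold Qf.
    set (al := brc KL (- m) A (m + p)) in *. set (am := brc KL m A p) in *.
    set (ba := brc KL (- m) a (r0 + m)) in *. set (bb := brc KL (- m) b (t0 + m)) in *.
    set (ca := brc KL m a r0) in *. set (cb := brc KL m b t0) in *.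
    destruct (d A p a r0 b t0) as [x y], (d A (m + p) a (r0 + m) b t0) as [u1 u2],
      (d A (m + p) a r0 b (t0 + m)) as [w1 w2].
    unfold Cadd, Cscale, C0 in *; cbn [fst snd] in *.
    injection K1 as K1x K1y; injection K2 as K2x K2y; injection K3 as K3x K3y.
    assert (E1 : al * am * x = ba * (am * u1) + bb * (am * w1)).
    { replace (al * am * x) with (am * (al * x)) by ring. rewrite K3x. ring. }
    assert (E2 : al * am * y = ba * (am * u2) + bb * (am * w2)).
    { replace (al * am * y) with (am * (al * y)) by ring. rewrite K3y. ring. }
    rewrite K1x, K2x in E1. rewrite K1y, K2y in E2.
    f_equal; lra. }
  assert (B0 : 0 <= B) by (pose proof (Rabs_pos r0); lra).
  set (k := up (2 * B / eps)).
  destruct (archimed (2 * B / eps)) as [Hk _]. fold k in Hk.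
  assert (Hm : 2 * B < IZR k * eps).
  { apply (Rmult_lt_compat_r eps) in Hk; auto.
    replace (2 * B / eps * eps) with (2 * B) in Hk by (field; lra). lra. }
  assert (Hm0 : 0 < IZR k * eps) by lra.
  assert (S1 := step k Hm).
  assert (S2 := step (2 * k)%Z ltac:(rewrite mult_IZR; lra)).
  assert (S3 := step (3 * k)%Z ltac:(rewrite mult_IZR; lra)).
  replace (IZR (2 * k) * eps) with (2 * (IZR k * eps)) in S2 by (rewrite mult_IZR; ring).
  replace (IZR (3 * k) * eps) with (3 * (IZR k * eps)) in S3 by (rewrite mult_IZR; ring).
  destruct (d A p a r0 b t0) as [x y].
  unfold Cscale, C0 in S1, S2, S3; simpl in S1, S2, S3.
  injection S1; injection S2; injection S3; intros.
  assert (xy : x <> 0 \/ y <> 0).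
  { destruct (Req_dec x 0), (Req_dec y 0); auto. subst. elim Hne; reflexivity. }
  apply (polyP A a b p r0 t0 (IZR k * eps) Hm0).
  - destruct xy; [apply (Rmult_eq_reg_r x) | apply (Rmult_eq_reg_r y)]; auto; lra.
  - destruct xy; [apply (Rmult_eq_reg_r x) | apply (Rmult_eq_reg_r y)]; auto; lra.
  - destruct xy; [apply (Rmult_eq_reg_r x) | apply (Rmult_eq_reg_r y)]; auto; lra.
Qed.
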